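(* In the setting below, the image of $\rho\colon G\to A$ is a normal subgroup of $A$.
   Context: Let $G$ be a group generated by $a_1,\dots,a_n$ with $z=a_1\cdots a_n$ central. Let $S_1,\dots,S_m\subseteq\{1,\dots,n\}$ with $|S_i\cap S_r|\le1$ for $i\neq r$. For $S\subseteq\{1,\dots,n\}$ let $G_S$ be the quotient of $G$ by the normal closure of $\{a_j: j\notin S\}$; let $a_{ij}$ be the image of $a_j$ in $G_{S_i}$ (so $a_{ij}=1$ if $j\notin S_i$) and $z_i=a_{i1}\cdots a_{in}$, which is central in $G_{S_i}$. Let $\bar G=G/\langle z\rangle$, $\bar G_{S_i}=G_{S_i}/\langle z_i\rangle$, and assume each $\bar G_{S_i}$ is free of rank $|S_i|-1$, the images of any $|S_i|-1$ of the $a_{ij}$, $j\in S_i$, forming a free basis. Let $A=\prod_{i=1}^mG_{S_i}$, $\bar A=\prod_{i=1}^m\bar G_{S_i}$, $\rho\colon G\to A$ the product of the projections, and $\bar\rho\colon\bar G\to\bar A$ the induced homomorphism. *)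

(* Defs.v *)
From mathcomp Require Import all_boot.
Set Implicit Arguments. Unset Strict Implicit. Unset Printing Implicit Defensive.

Record group := Group {
  gcar :> Type;
  gmul : gcar -> gcar -> gcar;
  gone : gcar;
  ginv : gcar -> gcar;
  gmulA : forall x y z, gmul x (gmul y z) = gmul (gmul x y) z;
  gmul1 : forall x, gmul gone x = x;
  gmulV : forall x, gmul (ginv x) x = gone
}.

Arguments gmul {g}. Arguments gone {g}. Arguments ginv {g}.

Definition is_hom (G H : group) (f : G -> H) : Prop :=
  forall x y, f (gmul x y) = gmul (f x) (f y).

Definition is_subgroup (G : group) (P : G -> Prop) : Prop :=
  [/\ P gone, (forall x y, P x -> P y -> P (gmul x y)) & (forall x, P x -> P (ginv x))].

Definition is_normal_subgroup (G : group) (P : G -> Prop) : Prop :=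
  is_subgroup P /\ (forall g x, P x -> P (gmul g (gmul x (ginv g)))).

Definition gen_by (G : group) (X : G -> Prop) (x : G) : Prop :=
  forall P, is_subgroup P -> (forall y, X y -> P y) -> P x.

Definition ncl (G : group) (X : G -> Prop) (x : G) : Prop :=
  forall P, is_normal_subgroup P -> (forall y, X y -> P y) -> P x.

Definition is_quotient_by (G Q : group) (q : G -> Q) (N : G -> Prop) : Prop :=
  [/\ is_hom q, (forall y, exists x, q x = y) & (forall x, q x = gone <-> N x)].

Definition free_basis (H : group) (I : Type) (b : I -> H) : Prop :=
  forall (K : group) (f : I -> K),
    exists phi : H -> K, [/\ is_hom phi, (forall i, phi (b i) = f i) &
      forall psi : H -> K, is_hom psi -> (forall i, psi (b i) = f i) ->
        forall h, psi h = phi h].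

Definition gprod (G : group) (s : seq G) : G := foldr gmul gone s.

(* Main.v *)
Require Import Defs.
From mathcomp Require Import all_boot.

Section GL.
Context {G : group}.
Implicit Types x y z : G.

Lemma gmulV' x : gmul (ginv x) x = gone. Proof. exact: gmulV. Qed.

Lemma mulgV x : gmul x (ginv x) = gone.
Proof.
rewrite -[gmul x _]gmul1 -[X in gmul X _](gmulV (ginv x)).
by rewrite -gmulA [gmul (ginv x) (gmul x _)]gmulA gmulV gmul1 gmulV.
Qed.

Lemma mulg1 x : gmul x gone = x.
Proof. by rewrite -(gmulV x) gmulA mulgV gmul1. Qed.

Lemma mulKg x y : gmul (ginv x) (gmul x y) = y.
Proof. by rewrite gmulA gmulV gmul1. Qed.

Lemma mulKVg x y : gmul x (gmul (ginv x) y) = y.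
Proof. by rewrite gmulA mulgV gmul1. Qed.

Lemma inv_uniq x y : gmul x y = gone -> ginv x = y.
Proof. by move=> h; rewrite -(mulKg x y) h mulg1. Qed.

Lemma invgK x : ginv (ginv x) = x.
Proof. by apply: inv_uniq; rewrite gmulV. Qed.

Lemma invMg x y : ginv (gmul x y) = gmul (ginv y) (ginv x).
Proof. by apply: inv_uniq; rewrite -gmulA mulKVg mulgV. Qed.

Lemma inv1 : ginv (@gone G) = gone.
Proof. by apply: inv_uniq; rewrite gmul1. Qed.

End GL.

Ltac gsimpl := repeat progress rewrite ?invMg ?invgK ?inv1 ?gmul1 ?mulg1
  ?mulKg ?mulKVg ?gmulV' ?mulgV -?gmulA.

Lemma hom1 {G H : group} (f : G -> H) : is_hom f -> f gone = gone.
Proof.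
move=> hf; have e : f gone = gmul (f gone) (f gone) by rewrite -hf gmul1.
by rewrite -[LHS](mulKg (f gone)) -e gmulV.
Qed.

Lemma homV {G H : group} (f : G -> H) x : is_hom f -> f (ginv x) = ginv (f x).
Proof.
move=> hf; apply/esym/inv_uniq; by rewrite -hf mulgV hom1.
Qed.

Definition comm {G : group} (u v : G) := gmul u (gmul v (gmul (ginv u) (ginv v))).

Lemma hom_comm {G H : group} (f : G -> H) (u v : G) : is_hom f ->
  f (comm u v) = comm (f u) (f v).
Proof. by move=> hf; rewrite /comm !hf !(homV _ _ hf). Qed.

Lemma comm1l (G : group) (v : G) : comm gone v = gone.
Proof. by rewrite /comm; gsimpl. Qed.
Lemma comm1r (G : group) (v : G) : comm v gone = gone.
Proof. by rewrite /comm; gsimpl. Qed.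
Lemma commxx (G : group) (v : G) : comm v v = gone.
Proof. by rewrite /comm; gsimpl. Qed.

Lemma cent_sub (H : group) (M : H -> Prop) (w : H) :
  is_normal_subgroup M -> is_subgroup (fun u => M (comm w u)).
Proof.
move=> [[M1 MM MV] MN]; split.
- by rewrite comm1r.
- move=> u v hu hv.
  have -> : comm w (gmul u v) = gmul (comm w u) (gmul u (gmul (comm w v) (ginv u))).
    by rewrite /comm; gsimpl.
  by apply: MM => //; apply: MN.
- move=> u hu.
  have -> : comm w (ginv u) = gmul (ginv u) (gmul (ginv (comm w u)) (ginv (ginv u))).
    by rewrite /comm; gsimpl.
  by apply: MN; apply: MV.
Qed.

Theorem mainTheorem11
  (G : group) (n : nat) (a : 'I_n -> G)
  (Hgen : forall x : G, gen_by (fun y => exists j, y = a j) x)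
  (Hz : forall x : G,
     gmul (gprod [seq a j | j <- enum 'I_n]) x
     = gmul x (gprod [seq a j | j <- enum 'I_n]))
  (m : nat) (S : 'I_m -> {set 'I_n})
  (HS : forall i r : 'I_m, i != r -> #|S i :&: S r| <= 1)
  (GS : 'I_m -> group) (pi : forall i, G -> GS i)
  (Hpi : forall i, is_quotient_by (pi i)
           (ncl (fun y => exists j, j \notin S i /\ y = a j)))
  (GSbar : 'I_m -> group) (q : forall i, GS i -> GSbar i)
  (Hq : forall i, is_quotient_by (q i)
           (gen_by (fun y => y = gprod [seq pi i (a j) | j <- enum 'I_n])))
  (Hfree : forall i j0, j0 \in S i ->
     free_basis (fun j : {j : 'I_n | j \in S i :\ j0} => q i (pi i (a (sval j))))) :
  forall (x : forall i, GS i) (g : G), exists g' : G,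
    forall i, gmul (x i) (gmul (pi i g) (ginv (x i))) = pi i g'.
Proof.
have hom i : is_hom (pi i) by case: (Hpi i).
have surj i : forall y, exists x, pi i x = y by case: (Hpi i).
have kill i j : j \notin S i -> pi i (a j) = gone.
  move=> hj; case: (Hpi i) => _ _ /(_ (a j)) [_ ->] //.
  by move=> P _ HP; apply: HP; exists j.
pose M i (u : GS i) := exists h, (forall r, r != i -> pi r h = gone) /\ pi i h = u.
have Mn i : is_normal_subgroup (M i).
  split; [split|].
  - by exists gone; split => [r _|]; apply: hom1.
  - move=> u v [h1 [e1 f1]] [h2 [e2 f2]]; exists (gmul h1 h2); split.
      by move=> r hr; rewrite hom e1 // e2 // gmul1.
    by rewrite hom f1 f2.
  - move=> u [h [e f]]; exists (ginv h); split.
      by move=> r hr; rewrite homV // e // inv1.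
    by rewrite homV // f.
  - move=> y u [h [e f]]; have [k <-] := surj i y.
    exists (gmul k (gmul h (ginv k))); split.
      by move=> r hr; rewrite !hom homV // e // gmul1 mulgV.
    by rewrite !hom homV // f.
have gen i (P : GS i -> Prop) : is_subgroup P -> (forall j, P (pi i (a j))) ->
    forall y, P y.
  move=> [P1 PM PV] Pa y; have [h <-] := surj i y.
  apply: (Hgen h (fun x => P (pi i x))).
  - split; first by rewrite hom1.
    + by move=> u v; rewrite hom; apply: PM.
    + by move=> u; rewrite homV //; apply: PV.
  - by move=> _ [j ->].
have B i j k : M i (comm (pi i (a j)) (pi i (a k))).
  have M1 : M i gone by case: (Mn i) => [[]].
  case: (boolP (j \in S i)) => hj; last by rewrite kill // comm1l.
  case: (boolP (k \in S i)) => hk; last by rewrite (kill i k) // comm1r.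
  case: (eqVneq j k) => [<-|hjk]; first by rewrite commxx.
  exists (comm (a j) (a k)); split; last by rewrite hom_comm.
  move=> r hr; rewrite hom_comm //.
  case: (boolP (j \in S r)) => hjr; last by rewrite kill // comm1l.
  case: (boolP (k \in S r)) => hkr; last by rewrite (kill r k) // comm1r.
  exfalso; have := HS i r; rewrite eq_sym hr => /(_ isT).
  have sub : [set j; k] \subset S i :&: S r.
    by apply/subsetP => t; rewrite !inE => /orP [] /eqP ->; rewrite ?hj ?hk ?hjr ?hkr.
  move/(leq_trans (subset_leq_card sub)); by rewrite cards2 hjk.
have C i (u v : GS i) : M i (comm u v).
  have Cw j : forall u, M i (comm (pi i (a j)) u).
    apply: gen; first exact: cent_sub.
    by move=> k; apply: B.
  have : forall w, M i (comm u w).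
    apply: gen; first exact: cent_sub.
    move=> j; have := Cw j u; case: (Mn i) => [[_ _ MV] _] /MV.
    by have -> : ginv (comm (pi i (a j)) u) = comm u (pi i (a j)) by rewrite /comm; gsimpl.
  by [].
move=> x g.
pose c i := comm (x i) (pi i g).
have L : forall s : seq 'I_m, uniq s -> exists h, forall r,
    pi r h = if r \in s then c r else gone.
  elim=> [|i s IH] /=.
    by move=> _; exists gone => r; rewrite hom1.
  move=> /andP [his us]; have [h Hh] := IH us.
  have [hi [ei fi]] := C i (x i) (pi i g).
  exists (gmul hi h) => r; rewrite hom Hh inE.
  case: (eqVneq r i) => [->|hri] /=; first by rewrite (negbTE his) fi mulg1.
  by rewrite ei // gmul1.
have [h Hh] := L (enum 'I_m) (enum_uniq _).
exists (gmul h g) => i; rewrite hom Hh mem_enum /c /comm; gsimpl.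
by [].
Qed.
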